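(* $\mathbf{M}=\boldsymbol{G}_N\mathbf{P}^t$.
   Context: Let $m\ge1$, $N=2^m$, $\mathbf{R}_m=\mathbb{F}_2[x_0,\dots,x_{m-1}]/(x_0^2-x_0,\dots,x_{m-1}^2-x_{m-1})$, and $\operatorname{ev}(Q)$ the evaluation vector of $Q\in\mathbf{R}_m$ at all points of $\mathbb{F}_2^m$. Let $\boldsymbol{G}_N=\begin{pmatrix}1&0\\1&1\end{pmatrix}^{\otimes m}$; row $i$ of $\boldsymbol{G}_N$ is $\operatorname{ev}$ of the monomial $x_0^{b_0}\cdots x_{m-1}^{b_{m-1}}$ with $(b_0,\dots,b_{m-1})$ the binary expansion of $2^m-1-i$. Let $\mathbf{P}\in\mathbb{F}_2^{N\times N}$ be upper triangular with ones on the diagonal (so $\mathcal{C}_{\mathbf{P}\boldsymbol{G}_N}(\mathcal{A})$, spanned by rows of $\mathbf{P}\boldsymbol{G}_N$ indexed by $\mathcal{A}$, is an upper polynomial polar code). For a monomial $h$, let $\check{h}=x_0\cdots x_{m-1}/h$ be its multiplicative complement; divisibility $f\mid g$ means the set of variables of $f$ is contained in that of $g$; $\operatorname{terms}(Q)$ is the set of monomials appearing in $Q$. The matrix $\mathbf{M}$ is defined by $M_{i,j}=|\{g\in\operatorname{terms}(P_j)\mid \check{g}\mid \check{f}\}| \pmod 2$, where $\operatorname{ev}(P_j)$ is row $j$ of $\mathbf{P}\boldsymbol{G}_N$ and $\operatorname{ev}(f)$ is row $i$ of $\boldsymbol{G}_N$. *)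

(* Defs.v *)
From mathcomp Require Import all_boot all_algebra.
Set Implicit Arguments. Unset Strict Implicit. Unset Printing Implicit Defensive.
Import GRing.Theory.
Local Open Scope ring_scope.

Definition bitn (n k : nat) : bool := odd (n %/ 2 ^ k).

(* Elements of R_m = F_2[x_0..x_{m-1}]/(x_i^2 - x_i): an element is an
   F_2-combination of squarefree monomials; a monomial x_{k1}...x_{kr} is
   represented by its set of variables {k1,...,kr} : {set 'I_m}, and a
   polynomial Q by its set of monomials (= terms Q). *)
Definition monomial (m : nat) := {set 'I_m}.
Definition Rpoly (m : nat) := {set {set 'I_m}}.
Definition terms (m : nat) (Q : Rpoly m) : {set {set 'I_m}} := Q.

(* multiplicative complement  check h = x_0...x_{m-1} / h *)
Definition mcompl (m : nat) (h : monomial m) : monomial m := ~: h.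
Definition mdvd (m : nat) (f g : monomial m) : bool := f \subset g.

Definition row_mono (m : nat) (i : nat) : monomial m :=
  [set k : 'I_m | bitn (2 ^ m - 1 - i) k].

(* G_N = [[1,0],[1,1]]^{(x) m}, entrywise: the Kronecker power entry is the
   product over the m binary digits of the 2x2 kernel entries. *)
Definition kernel2 (a b : bool) : 'F_2 := if b then (if a then 1 else 0) else 1.
Definition GN (m : nat) : 'M['F_2]_(2 ^ m) :=
  \matrix_(i, j) \prod_(k < m) kernel2 (bitn i k) (bitn j k).

(* The point of F_2^m indexing column j (the ordering of evaluation points
   making row i of G_N equal to ev (row_mono i)). *)
Definition point (m : nat) (j : nat) (k : 'I_m) : 'F_2 :=
  (bitn (2 ^ m - 1 - j) k)%:R.

Definition mono_eval (m : nat) (h : monomial m) (x : 'I_m -> 'F_2) : 'F_2 :=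
  \prod_(k in h) x k.
Definition ev (m : nat) (Q : Rpoly m) : 'rV['F_2]_(2 ^ m) :=
  \row_(j < 2 ^ m) \sum_(g in terms Q) mono_eval g (point j).

Definition unit_upper (n : nat) (P : 'M['F_2]_n) : Prop :=
  (forall i j : 'I_n, (j < i)%N -> P i j = 0) /\ (forall i : 'I_n, P i i = 1).

Definition Mmat (m : nat) (Pj : 'I_(2 ^ m) -> Rpoly m) : 'M['F_2]_(2 ^ m) :=
  \matrix_(i, j)
    (#|[set g in terms (Pj j) |
         mdvd (mcompl g) (mcompl (row_mono m i))]|)%:R.

(* Main.v *)
Require Import Defs.
From mathcomp Require Import all_boot all_algebra.
From mathcomp Require Import zify.
Set Implicit Arguments. Unset Strict Implicit. Unset Printing Implicit Defensive.
Import GRing.Theory.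
Local Open Scope ring_scope.

Lemma card_setT (T : finType) : #|{set T}| = (2 ^ #|T|)%N.
Proof. by rewrite -(cardsT ({set T} : finType)) -powersetT card_powerset cardsT. Qed.

Lemma bit0n n : bitn n 0 = odd n.
Proof. by rewrite /bitn expn0 divn1. Qed.

Lemma bitSn n k : bitn n k.+1 = bitn n./2 k.
Proof. by rewrite /bitn expnS divnMA divn2. Qed.

Lemma bit_eq m : forall a b, (a < 2 ^ m)%N -> (b < 2 ^ m)%N ->
  (forall k, (k < m)%N -> bitn a k = bitn b k) -> a = b.
Proof.
elim: m => [|m IH] a b ha hb H.
  by rewrite expn0 in ha hb; lia.
rewrite -(odd_double_half a) -(odd_double_half b).
have h0 := H 0%N isT; rewrite !bit0n in h0; rewrite h0.
congr (_ + _.*2)%N; apply: IH.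
- by rewrite ltn_half_double -mul2n -expnS.
- by rewrite ltn_half_double -mul2n -expnS.
- by move=> k hk; rewrite -!bitSn; apply: H.
Qed.

Lemma bit_compl m : forall c k, (c < 2 ^ m)%N -> (k < m)%N ->
  bitn (2 ^ m - 1 - c) k = ~~ bitn c k.
Proof.
elim: m => [|m IH] c k hc hk; first by [].
have e : (2 ^ m.+1 - 1 - c = (~~ odd c) + (2 ^ m - 1 - c./2).*2)%N.
  have hq : (c./2 < 2 ^ m)%N by rewrite ltn_half_double -mul2n -expnS.
  move: hc hq; rewrite expnS.
  have := odd_double_half c; case: (odd c) => /= ec; rewrite -{1 3}ec; lia.
rewrite e; case: k hk => [|k] hk.
  by rewrite !bit0n oddD odd_double; case: (odd c).
rewrite !bitSn half_bit_double IH //.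
by rewrite ltn_half_double -mul2n -expnS.
Qed.

Lemma prod_bool (T : finType) (A : pred T) (b : T -> bool) :
  \prod_(k in A) ((b k)%:R : 'F_2) = ([forall k in A, b k])%:R.
Proof.
have [allb|] := boolP [forall k in A, b k].
  by apply: big1 => k kA; move/forall_inP: allb => /(_ k kA) ->.
move/forall_inPn => [k kA nbk].
by rewrite (bigD1 k) //= (negbTE nbk) mul0r.
Qed.

Lemma prod_boolT (T : finType) (b : T -> bool) :
  \prod_k ((b k)%:R : 'F_2) = ([forall k, b k])%:R.
Proof.
have [allb|] := boolP [forall k, b k].
  by apply: big1 => k _; move/forallP: allb => /(_ k) ->.
move/forallPn => [k nbk].
by rewrite (bigD1 k) //= (negbTE nbk) mul0r.
Qed.

Lemma card_supsets (T : finType) (A : {set T}) :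
  #|[set x : {set T} | A \subset x]| = (2 ^ #|~: A|)%N.
Proof.
rewrite -card_powerset.
have -> : [set x : {set T} | A \subset x] = (@setC T) @: powerset (~: A).
  apply/setP => x; rewrite inE; apply/idP/imsetP.
    by move=> Ax; exists (~: x); rewrite ?setCK // powersetE setCS.
  by move=> [y]; rewrite powersetE => yA ->; rewrite -setCS setCK.
by rewrite card_imset //; apply: setC_inj.
Qed.

Lemma keyB m (S g : {set 'I_m}) :
  \sum_(x : {set 'I_m} | ~: S \subset x) (((g \subset x) : nat)%:R : 'F_2)
  = ((S \subset g) : nat)%:R.
Proof.
rewrite -natr_sum.
have -> : (\sum_(x : {set 'I_m} | ~: S \subset x) ((g \subset x) : nat) =
          #|[set x : {set 'I_m} | (~: S :|: g) \subset x]|)%N.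
  rewrite -sum1_card big_mkcond [RHS]big_mkcond /=.
  apply: eq_bigr => x _; rewrite inE subUset.
  by case: (~: S \subset x); case: (g \subset x).
rewrite card_supsets setCU setCK -setDE.
have := cards_eq0 (S :\: g); rewrite setD_eq0.
case: #|S :\: g| => [|n] /= <- //.
rewrite expnS natrM.
have -> : (2%:R : 'F_2) = 0 by apply/eqP.
by rewrite mul0r.
Qed.

Lemma memR m (c : 'I_(2 ^ m)) (k : 'I_m) :
  (k \in row_mono m c) = ~~ bitn c k.
Proof. by rewrite inE bit_compl. Qed.

Lemma GNE m (a b : 'I_(2 ^ m)) :
  GN m a b = ((row_mono m a \subset row_mono m b) : nat)%:R.
Proof.
rewrite mxE.
have -> : \prod_(k < m) kernel2 (bitn a k) (bitn b k) =
          \prod_(k < m) (((bitn b k ==> bitn a k) : bool) : nat)%:R.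
  by apply: eq_bigr => k _; rewrite /kernel2; case: (bitn b k); case: (bitn a k).
rewrite prod_boolT; congr (_ %:R); congr nat_of_bool.
apply/forallP/subsetP.
  move=> H k; rewrite !memR; move: (H k); by case: (bitn a k); case: (bitn b k).
move=> H k; move: (H k); rewrite !memR; by case: (bitn a k); case: (bitn b k) => //= /(_ isT).
Qed.

Lemma evE m (Q : Rpoly m) (c : 'I_(2 ^ m)) :
  ev Q 0 c = \sum_(g in Q) ((g \subset row_mono m c) : nat)%:R.
Proof.
rewrite mxE; apply: eq_bigr => g _.
rewrite /mono_eval /point.
have -> : \prod_(k in g) ((bitn (2 ^ m - 1 - c) k) : nat)%:R =
          \prod_(k in g) (((k \in row_mono m c) : bool) : nat)%:R :> 'F_2.
  by apply: eq_bigr => k _; rewrite inE.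
by rewrite prod_bool; congr (_ %:R); congr nat_of_bool; apply/forall_inP/subsetP.
Qed.

Lemma R_bij m : bijective (fun c : 'I_(2 ^ m) => row_mono m c).
Proof.
apply: inj_card_bij; last by rewrite card_setT !card_ord.
move=> a b /setP e; apply/val_inj => /=.
have ha := ltn_ord a; have hb := ltn_ord b.
suff : (2 ^ m - 1 - a = 2 ^ m - 1 - b)%N by lia.
apply: (@bit_eq m); try lia.
move=> k hk; have := e (Ordinal hk); by rewrite !inE.
Qed.

Theorem proposition3 (m : nat) (hm : (1 <= m)%N)
  (P : 'M['F_2]_(2 ^ m)) (hP : unit_upper P)
  (Pj : 'I_(2 ^ m) -> Rpoly m)
  (hPj : forall j : 'I_(2 ^ m), ev (Pj j) = row j (P *m GN m)) :
  Mmat Pj = GN m *m P^T.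
Proof.
apply/matrixP => i j; rewrite !mxE.
have -> : #|[set g in terms (Pj j) | mdvd (mcompl g) (mcompl (row_mono m i))]|
   = (\sum_(g in Pj j) ((row_mono m i \subset g) : nat))%N.
  rewrite -sum1_card big_mkcond [RHS]big_mkcond /=.
  apply: eq_bigr => g _; rewrite !inE /mdvd /mcompl setCS /terms.
  by case: (g \in Pj j); case: (row_mono m i \subset g).
rewrite natr_sum.
under eq_bigr => g _ do rewrite -keyB.
rewrite exchange_big /=.
have [h hK Kh] := R_bij m.
have inner : forall x : {set 'I_m}, \sum_(g in Pj j) ((g \subset x) : nat)%:R
    = \sum_l P j l * ((row_mono m l \subset x) : nat)%:R :> 'F_2.
  move=> x; rewrite -[x]Kh -evE hPj mxE mxE.
  by apply: eq_bigr => l _; rewrite GNE.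
under eq_bigr => x _ do rewrite inner.
rewrite exchange_big /=; apply: eq_bigr => l _.
by rewrite -mulr_sumr keyB GNE !mxE mulrC.
Qed.
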